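(* Let $\mathcal{H}$ be a complex Hilbert space and let $T, S\in\mathbb{B}(\mathcal{H})$. If $N(\cdot)$ is an algebra norm on $\mathbb{B}(\mathcal{H})$, then for each choice of sign, $$w_{N}(TS \pm ST^* ) \leq w_{N}(S)\big(N(T) + N(T^* )\big).$$ In particular, if $N(\cdot)$ is a self-adjoint algebra norm, then $w_{N}(TS \pm ST^* ) \leq 2w_{N}(S)N(T)$.
   Context: $\mathbb{B}(\mathcal{H})$ is the algebra of bounded linear operators on $\mathcal{H}$. A norm $N(\cdot)$ on $\mathbb{B}(\mathcal{H})$ is an algebra norm if $N(TS)\le N(T)N(S)$ for all $T,S$, and is self-adjoint if $N(T^* )=N(T)$ for all $T$. For $A\in\mathbb{B}(\mathcal{H})$, ${\rm Re}(A)=\frac{A+A^*}{2}$. The generalized numerical radius is $w_N(T)=\sup_{\theta\in\mathbb{R}} N\big({\rm Re}(e^{i\theta}T)\big)$. *)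

(* Defs.v *)
From HB Require Import structures.
From mathcomp Require Import all_boot all_order all_algebra.
From mathcomp Require Import complex.
From mathcomp Require Import boolp classical_sets reals trigo.
From Stdlib Require Import ClassicalEpsilon.
Set Implicit Arguments. Unset Strict Implicit. Unset Printing Implicit Defensive.
Import Order.TTheory GRing.Theory Num.Theory.
Local Open Scope ring_scope.
Local Open Scope complex_scope.

Record hilbert_space (R : realType) (V : lmodType R[i]) := HilbertSpace {
  ip : V -> V -> R[i];
  ipDl : forall x y z, ip (x + y) z = ip x z + ip y z;
  ipZl : forall (a : R[i]) x y, ip (a *: x) y = a * ip x y;
  ip_conj : forall x y, ip y x = conjc (ip x y);
  ip_ge0 : forall x, 0 <= ip x x;
  ip_eq0 : forall x, ip x x = 0 -> x = 0;
  ip_complete : forall u : nat -> V,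
    (forall e : R, 0 < e -> exists M : nat, forall m n : nat, (M <= m)%N -> (M <= n)%N ->
        Num.sqrt (complex.Re (ip (u m - u n) (u m - u n))) < e) ->
    exists l : V, forall e : R, 0 < e -> exists M : nat, forall n : nat, (M <= n)%N ->
        Num.sqrt (complex.Re (ip (u n - l) (u n - l))) < e
}.

Section Ops.
Variables (R : realType) (V : lmodType R[i]) (H : hilbert_space V).

Definition hnorm (x : V) : R := Num.sqrt (complex.Re (ip H x x)).

Definition bounded_op (T : V -> V) : Prop :=
  (forall x y, T (x + y) = T x + T y) /\
  (forall (a : R[i]) x, T (a *: x) = a *: T x) /\
  (exists M : R, forall x, hnorm (T x) <= M * hnorm x).

Definition op_add (T S : V -> V) : V -> V := fun x => T x + S x.
Definition op_opp (T : V -> V) : V -> V := fun x => - T x.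
Definition op_scale (a : R[i]) (T : V -> V) : V -> V := fun x => a *: T x.
Definition op_mul (T S : V -> V) : V -> V := fun x => T (S x).

Definition is_adjoint (T A : V -> V) : Prop :=
  forall x y, ip H (T x) y = ip H x (A y).
Definition adj (T : V -> V) : V -> V :=
  epsilon (inhabits (fun x : V => x)) (is_adjoint T).

Definition ReOp (A : V -> V) : V -> V :=
  op_scale (2%:R)^-1 (op_add A (adj A)).

(* a norm N on B(H) which is an algebra norm (values of N outside B(H) are
   irrelevant) *)
Definition algebra_norm (N : (V -> V) -> R) : Prop :=
  (forall T, bounded_op T -> 0 <= N T) /\
  (forall T, bounded_op T -> N T = 0 -> T = (fun _ => 0)) /\
  (forall a T, bounded_op T -> N (op_scale a T) = ComplexField.Normc.normc a * N T) /\
  (forall T S, bounded_op T -> bounded_op S -> N (op_add T S) <= N T + N S) /\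
  (forall T S, bounded_op T -> bounded_op S -> N (op_mul T S) <= N T * N S).

Definition selfadjoint_norm (N : (V -> V) -> R) : Prop :=
  forall T, bounded_op T -> N (adj T) = N T.

Definition expi (t : R) : R[i] := (cos t) +i* (sin t).

Definition wN (N : (V -> V) -> R) (T : V -> V) : R :=
  sup [set N (ReOp (op_scale (expi t) T)) | t in [set: R]].

End Ops.

(* Main.v *)
Require Import Defs.
From mathcomp Require Import all_boot all_order all_algebra.
From mathcomp Require Import complex.
From mathcomp Require Import boolp classical_sets reals trigo.
From mathcomp Require Import ring lra.
From Stdlib Require Import ClassicalEpsilon.
Set Implicit Arguments. Unset Strict Implicit. Unset Printing Implicit Defensive.
Import Order.TTheory GRing.Theory Num.Theory.
Local Open Scope ring_scope.
Local Open Scope complex_scope.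
Local Open Scope classical_set_scope.

Section Basics.
Variables (R : realType) (V : lmodType R[i]) (H : hilbert_space V).
Local Notation ip := (ip H).
Definition q (x : V) : R := complex.Re (ip x x).

Lemma ipDr x y z : ip x (y + z) = ip x y + ip x z.
Proof. by rewrite ip_conj ipDl rmorphD /= -!ip_conj. Qed.
Lemma ipZr (a : R[i]) x y : ip x (a *: y) = conjc a * ip x y.
Proof. by rewrite ip_conj ipZl rmorphM /= -ip_conj. Qed.
Lemma ip0l y : ip 0 y = 0.
Proof. by rewrite -(scale0r (0:V)) ipZl mul0r. Qed.
Lemma ip0r y : ip y 0 = 0.
Proof. by rewrite ip_conj ip0l conjc0. Qed.
Lemma ipNl x y : ip (- x) y = - ip x y.
Proof. by rewrite -scaleN1r ipZl mulN1r. Qed.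
Lemma ipNr x y : ip x (- y) = - ip x y.
Proof. by rewrite ip_conj ipNl rmorphN /= -ip_conj. Qed.
Lemma ipBl x y z : ip (x - y) z = ip x z - ip y z.
Proof. by rewrite ipDl ipNl. Qed.
Lemma ipBr x y z : ip x (y - z) = ip x y - ip x z.
Proof. by rewrite ipDr ipNr. Qed.

Lemma ip_real x : ip x x = (q x)%:C.
Proof.
have := ger0_Im (@ip_ge0 _ _ H x); rewrite /q; case: (ip x x) => a b /= ->.
by [].
Qed.
Lemma q_ge0 x : 0 <= q x.
Proof. by have := @ip_ge0 _ _ H x; rewrite ip_real lecR. Qed.
Lemma q_eq0 x : q x = 0 -> x = 0.
Proof. by move=> h; apply: (@ip_eq0 _ _ H); rewrite ip_real h. Qed.
Lemma q0 : q 0 = 0.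
Proof. by rewrite /q ip0l. Qed.
Lemma hnormE x : hnorm H x = Num.sqrt (q x). Proof. by []. Qed.
Lemma hnorm_ge0 x : 0 <= hnorm H x. Proof. exact: sqrtr_ge0. Qed.
Lemma hnorm_sqr x : hnorm H x ^+ 2 = q x.
Proof. by rewrite hnormE sqr_sqrtr ?q_ge0. Qed.

Lemma mulcJ (z : R[i]) : z * conjc z = ((ComplexField.Normc.normc z) ^+ 2)%:C.
Proof.
case: z => a b /=; rewrite sqr_sqrtr ?addr_ge0 ?sqr_ge0 //.
simpc; congr (_ +i* _); ring.
Qed.

Lemma conjc_realC (r : R) : conjc (r%:C) = r%:C.
Proof. exact: conjc_real. Qed.

Lemma key_id x y : q y != 0 ->
  ip (x - (ip x y / ip y y) *: y) (x - (ip x y / ip y y) *: y)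
  = ip x x - ip x y * conjc (ip x y) / ip y y.
Proof.
move=> qy0; set a := ip x y.
have hr : ip y y = (q y)%:C := ip_real y.
have hr0 : ip y y != 0 by rewrite hr; apply: contra qy0 => /eqP [->].
rewrite ipBl !ipBr !ipZl !ipZr rmorphM /= conjc_inv hr conjc_real -hr.
rewrite -/a (@ip_conj _ _ H x y) -/a.
field.
exact: hr0.
Qed.
Local Notation nc := (@ComplexField.Normc.normc R).

Lemma nc_ge0 (z : R[i]) : 0 <= nc z.
Proof. by case: z => a b; apply: sqrtr_ge0. Qed.

Lemma key_q x y : q y != 0 ->
  q (x - (ip x y / ip y y) *: y) = q x - nc (ip x y) ^+ 2 / q y.
Proof.
move=> qy0; have := key_id x qy0; rewrite ip_real mulcJ !ip_real.
rewrite -rmorphV ?unitfE // -rmorphM -rmorphB /=.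
by case.
Qed.

Lemma CS2 x y : nc (ip x y) ^+ 2 <= q x * q y.
Proof.
have [qy0|qy0] := eqVneq (q y) 0.
  by rewrite (q_eq0 qy0) ip0r ComplexField.Normc.normc0 q0 mulr0 expr0n.
have qyp : 0 < q y by rewrite lt_def qy0 q_ge0.
have := q_ge0 (x - (ip x y / ip y y) *: y); rewrite key_q // subr_ge0.
by rewrite ler_pdivrMr.
Qed.

Lemma CS x y : nc (ip x y) <= hnorm H x * hnorm H y.
Proof.
rewrite -[nc _]ger0_norm ?nc_ge0 //.
rewrite -sqrtr_sqr !hnormE -sqrtrM ?q_ge0 //.
by apply: ler_wsqrtr; apply: CS2.
Qed.

End Basics.

Section B.
Variables (R : realType) (V : lmodType R[i]) (H : hilbert_space V).
Local Notation ip := (ip H).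
Local Notation q := (@q R V H).
Local Notation nc := (@ComplexField.Normc.normc R).
End B.
Lemma par_gen (Z : comRingType) (u v w t : Z) :
  u + v + (w + t) + (u - v - (w - t)) = u *+ 2 + t *+ 2.
Proof. rewrite !mulr2n; ring. Qed.
Section B2.
Variables (R : realType) (V : lmodType R[i]) (H : hilbert_space V).
Local Notation ip := (ip H).
Local Notation q := (@q R V H).
Lemma parallelogram a b : q (a + b) + q (a - b) = 2%:R * q a + 2%:R * q b.
Proof.
have E : ip (a + b) (a + b) + ip (a - b) (a - b) = ip a a *+ 2 + ip b b *+ 2.
  rewrite !ipDl !ipNl !ipDr !ipNr.
  exact: par_gen.
rewrite !ip_real !mulr2n in E.
move/(congr1 (@complex.Re R)): E => /= ->.
by rewrite !mulr_natl !mulr2n.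
Qed.

Lemma qN x : q (- x) = q x.
Proof. by rewrite /q ipNl ipNr opprK. Qed.

Lemma qB_sym x y : q (x - y) = q (y - x).
Proof. by rewrite -qN opprB. Qed.

Lemma small_inv (c : R) : 0 < c -> exists N : nat, forall n, (N <= n)%N -> (n.+1%:R)^-1 < c.
Proof.
move=> c0; exists (Num.Def.archi_bound c^-1) => n hn.
have h1 : c^-1 < (Num.Def.archi_bound c^-1)%:R.
  by apply: archi_boundP; rewrite invr_ge0 ltW.
rewrite -[c]invrK ltf_pV2 ?posrE ?invr_gt0 //.
apply: (lt_le_trans h1); rewrite ler_nat; apply: leq_trans hn _; exact: leqnSn.
Qed.

Lemma le0_small (a : R) : (forall e, 0 < e -> a < e) -> a <= 0.
Proof.
move=> h; rewrite leNgt; apply/negP => a0.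
by have := h a a0; rewrite ltxx.
Qed.

Local Notation nc := (@ComplexField.Normc.normc R).
Lemma nc_real (r : R) : nc r%:C = `|r|.
Proof. by rewrite /= expr0n addr0 sqrtr_sqr. Qed.

Lemma q_scale (c : R[i]) x : q (c *: x) = nc c ^+ 2 * q x.
Proof.
have E : ip (c *: x) (c *: x) = (c * conjc c) * ip x x.
  by rewrite ipZl ipZr mulrA.
by move: E; rewrite mulcJ !ip_real -rmorphM /=; case.
Qed.

Lemma nc2 : nc (2%:R : R[i]) = 2%:R.
Proof.
have -> : (2%:R : R[i]) = (2%:R : R)%:C by rewrite rmorph_nat.
by rewrite nc_real ger0_norm.
Qed.

Lemma riesz (f : V -> R[i]) (M : R) :
  (forall x y, f (x + y) = f x + f y) -> (forall a x, f (a *: x) = a * f x) ->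
  0 < M -> (forall x, nc (f x) <= M * hnorm H x) ->
  exists y, forall x, f x = ip x y.
Proof.
move=> fD fZ M0 fM.
have f0 : f 0 = 0 by rewrite -(scale0r (0:V)) fZ mul0r.
have fN : forall x, f (- x) = - f x by move=> x; rewrite -scaleN1r fZ mulN1r.
have fB : forall x y, f (x - y) = f x - f y by move=> x y; rewrite fD fN.
case: (pselect (forall x, f x = 0)) => [fz|].
  by exists 0 => x; rewrite ip0r fz.
move=> /existsNP [x1 fx1].
set x0 := (f x1)^-1 *: x1.
have fx0 : f x0 = 1 by rewrite fZ mulVf //; apply/eqP.
pose E := [set q x | x in [set x | f x = 1]].
pose D := inf E.
have En : E !=set0 by exists (q x0); exists x0.
have Elb : has_lbound E by exists 0 => _ [x _ <-]; exact: q_ge0.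
have hD : forall x, f x = 1 -> D <= q x.
  by move=> x fx; apply: (ge_inf Elb); exists x.
have hseq : forall n : nat, exists x, f x = 1 /\ q x < D + (n.+1%:R)^-1.
  move=> n; have ep : 0 < (n.+1%:R : R)^-1 by rewrite invr_gt0 ltr0Sn.
  have [e [x fx <-] he] := inf_adherent ep (conj En Elb).
  by exists x.
have [xs hxs] := choice _ hseq.
pose en (n : nat) : R := (n.+1%:R)^-1.
have en_gt0 : forall n, 0 < en n by move=> n; rewrite invr_gt0 ltr0Sn.
have hx1 : forall n, f (xs n) = 1 by move=> n; case: (hxs n).
have hx2 : forall n, q (xs n) < D + en n by move=> n; case: (hxs n).
have cauchy : forall m n, q (xs m - xs n) <= 2%:R * en m + 2%:R * en n.
  move=> m n.
  have par := parallelogram (xs m) (xs n).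
  have hmid : D <= q ((2%:R)^-1 *: (xs m + xs n)).
    apply: hD; rewrite fZ fD !hx1 -mulr2n mulVf // pnatr_eq0 //.
  rewrite q_scale ComplexField.Normc.normcV nc2 in hmid.
  have := hx2 m; have := hx2 n.
  have := @q_ge0 _ _ H (xs m + xs n).
  move: hmid par; move: (q (xs m + xs n)) (q (xs m - xs n)) (q (xs m)) (q (xs n)) (en m) (en n) => a b c d u v.
  move=> h1 h2 h3 h4 h5.
  have h1' : 4%:R * D <= a.
    have -> : a = 4%:R * ((2%:R^-1)^+2 * a) by field.
    by rewrite ler_pM2l.
  lra.
have [z hz] : exists z : V, forall e : R, 0 < e -> exists N : nat,
    forall n : nat, (N <= n)%N -> hnorm H (xs n - z) < e.
  apply: (@ip_complete _ _ H xs) => e e0.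
  have c0 : 0 < e ^+ 2 / 4%:R by rewrite divr_gt0 // exprn_gt0.
  have [N hN] := small_inv c0.
  exists N => m n hm hn.
  rewrite -/(q (xs m - xs n)) -[X in _ < X](ger0_norm (ltW e0)) -sqrtr_sqr ltr_sqrt ?exprn_gt0 //.
  have := cauchy m n; have := hN m hm; have := hN n hn.
  rewrite -/(en m) -/(en n) => h1 h2 h3.
  lra.
have fz : f z = 1.
  apply/eqP; rewrite -subr_eq0; apply/eqP/ComplexField.Normc.eq0_normc.
  apply/le_anti; rewrite nc_ge0 andbT; apply: le0_small => e e0.
  have [N hN] := hz (e / M) (divr_gt0 e0 M0).
  have h := hN N (leqnn N).
  have -> : f z - 1 = - f (xs N - z) by rewrite fB hx1 opprB.
  rewrite normcN; apply: (le_lt_trans (fM _)).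
  by rewrite -ltr_pdivlMl // mulrC.
have ortho : forall k, f k = 0 -> ip z k = 0.
  move=> k fk.
  have [qk0|qk0] := eqVneq (q k) 0.
    by rewrite (q_eq0 qk0) ip0r.
  have qkp : 0 < q k by rewrite lt_def qk0 q_ge0.
  have hkp : 0 < hnorm H k by rewrite hnormE sqrtr_gt0.
  have bnd : forall n, nc (ip (xs n) k) ^+ 2 < en n * q k.
    move=> n.
    have := hD (xs n - (ip (xs n) k / ip k k) *: k).
    rewrite key_q // fB fZ fk mulr0 subr0 hx1 => /(_ erefl) h.
    have := hx2 n; move: h.
    rewrite -ltr_pdivrMr //.
    move: (nc (ip (xs n) k) ^+ 2 / q k) (q (xs n)) (en n) => a b c.
    lra.
  apply/ComplexField.Normc.eq0_normc/le_anti; rewrite nc_ge0 andbT.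
  apply: le0_small => e e0.
  have c1 : 0 < (e / 2%:R) ^+ 2 / q k by rewrite divr_gt0 // exprn_gt0 // divr_gt0.
  have [N1 hN1] := small_inv c1.
  have [N2 hN2] := hz (e / (2%:R * hnorm H k)) (divr_gt0 e0 (mulr_gt0 (ltr0Sn _ 1) hkp)).
  pose n := maxn N1 N2.
  have h1 := hN1 n (leq_maxl _ _).
  have h2 := hN2 n (leq_maxr _ _).
  have h3 := bnd n.
  have h4 : nc (ip (xs n) k) < e / 2%:R.
    have h5 : nc (ip (xs n) k) ^+ 2 < (e / 2%:R) ^+ 2.
      apply: (lt_le_trans h3); rewrite -ler_pdivlMr //; exact: ltW.
    have := nc_ge0 (ip (xs n) k); have : 0 < e / 2%:R by rewrite divr_gt0.
    move: h5; move: (nc (ip (xs n) k)) (e / 2%:R) => a b.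
    nra.
  have h6 : nc (ip (xs n - z) k) < e / 2%:R.
    apply: (le_lt_trans (@CS _ _ H _ _)).
    have E2 : e / (2%:R * hnorm H k) = e / 2%:R / hnorm H k by rewrite invfM mulrA.
    by rewrite -ltr_pdivlMr // -E2.
  have -> : ip z k = ip (xs n) k - ip (xs n - z) k by rewrite ipBl opprB addrC subrK.
  apply: (le_lt_trans (le_normcD _ _)); rewrite normcN.
  move: h4 h6; move: (nc (ip (xs n) k)) (nc (ip (xs n - z) k)) => a b.
  lra.
have zz0 : ip z z != 0.
  apply/eqP => /(@ip_eq0 _ _ H) z0.
  by move: fz; rewrite z0 f0 => /eqP; rewrite eq_sym oner_eq0.
exists ((ip z z)^-1 *: z) => x.
have := ortho (x - f x *: z); rewrite fB fZ fz mulr1 subrr => /(_ erefl) h.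
have h' : ip (x - f x *: z) z = 0 by rewrite (@ip_conj _ _ H) h conjc0.
move: h'; rewrite ipBl ipZl ipZr => /eqP; rewrite subr_eq0 => /eqP ->.
rewrite ip_real conjc_inv conjc_real -ip_real.
by rewrite mulrC mulfK.
Qed.
End B2.

Section E.
Variables (R : realType) (V : lmodType R[i]) (H : hilbert_space V).
Local Notation ip := (ip H).
Local Notation q := (@q R V H).
Local Notation nc := (@ComplexField.Normc.normc R).
Lemma bnd_pos T : bounded_op H T ->
  exists M : R, 0 <= M /\ forall x, hnorm H (T x) <= M * hnorm H x.
Proof.
move=> [_ [_ [M hM]]]; exists `|M|; split => // x.
apply: (le_trans (hM x)); apply: ler_wpM2r; [exact: hnorm_ge0 | exact: ler_norm].
Qed.

Lemma hnorm_le_sq x y (c : R) : 0 <= c -> q x <= c * q y -> hnorm H x <= Num.sqrt c * hnorm H y.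
Proof.
move=> c0 h; rewrite !hnormE -sqrtrM //; exact: ler_wsqrtr.
Qed.

Lemma q_le_of_hnorm x y (M : R) : 0 <= M -> hnorm H x <= M * hnorm H y -> q x <= M ^+ 2 * q y.
Proof.
move=> M0 h; rewrite -!(@hnorm_sqr _ _ H) -exprMn !expr2.
by apply: ler_pM; rewrite ?hnorm_ge0.
Qed.

Lemma bounded_add T S : bounded_op H T -> bounded_op H S -> bounded_op H (op_add T S).
Proof.
move=> hT hS; have [M1 [M10 h1]] := bnd_pos hT; have [M2 [M20 h2]] := bnd_pos hS.
case: hT => [TD [TZ _]]; case: hS => [SD [SZ _]].
split; [|split].
- by move=> x y; rewrite /op_add TD SD addrACA.
- by move=> a x; rewrite /op_add TZ SZ scalerDr.
exists (Num.sqrt (2%:R * M1 ^+ 2 + 2%:R * M2 ^+ 2)) => x.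
apply: hnorm_le_sq; first by rewrite addr_ge0 // mulr_ge0 // sqr_ge0.
have par := parallelogram H (T x) (S x).
have := q_ge0 H (T x - S x).
have := q_le_of_hnorm M10 (h1 x); have := q_le_of_hnorm M20 (h2 x).
rewrite /op_add; move: par; move: (q (T x + S x)) (q (T x - S x)) (q (T x)) (q (S x)) => a b c d.
have := q_ge0 H x; move: (q x) => e.
move=> e0 par h3 h4 h5.
rewrite mulrDl; lra.
Qed.

Lemma bounded_mul T S : bounded_op H T -> bounded_op H S -> bounded_op H (op_mul T S).
Proof.
move=> hT hS; have [M1 [M10 h1]] := bnd_pos hT; have [M2 [M20 h2]] := bnd_pos hS.
case: hT => [TD [TZ _]]; case: hS => [SD [SZ _]].
split; [|split].
- by move=> x y; rewrite /op_mul SD TD.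
- by move=> a x; rewrite /op_mul SZ TZ.
exists (M1 * M2) => x; rewrite /op_mul -mulrA.
apply: (le_trans (h1 _)); exact: ler_wpM2l.
Qed.

Lemma hnorm_scale (a : R[i]) x : hnorm H (a *: x) = nc a * hnorm H x.
Proof.
rewrite !hnormE q_scale sqrtrM ?exprn_ge0 ?nc_ge0 // sqrtr_sqr ger0_norm //; exact: nc_ge0.
Qed.

Lemma bounded_scale a T : bounded_op H T -> bounded_op H (op_scale a T).
Proof.
move=> hT; have [M1 [M10 h1]] := bnd_pos hT.
case: hT => [TD [TZ _]].
split; [|split].
- by move=> x y; rewrite /op_scale TD scalerDr.
- by move=> b x; rewrite /op_scale TZ !scalerA mulrC.
exists (nc a * M1) => x; rewrite /op_scale hnorm_scale -mulrA.
apply: ler_wpM2l; [exact: nc_ge0 | exact: h1].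
Qed.

Lemma bounded_opp T : bounded_op H T -> bounded_op H (op_opp T).
Proof.
move=> hT; have [M1 [M10 h1]] := bnd_pos hT.
case: hT => [TD [TZ _]].
split; [|split].
- by move=> x y; rewrite /op_opp TD opprD.
- by move=> b x; rewrite /op_opp TZ scalerN.
exists M1 => x; rewrite /op_opp hnormE qN; exact: h1.
Qed.

Lemma ip_inj_r u v : (forall x, ip x u = ip x v) -> u = v.
Proof.
move=> h; apply/eqP; rewrite -subr_eq0; apply/eqP; apply: (@ip_eq0 _ _ H).
by rewrite ipBr h subrr.
Qed.

Lemma adj_eq T A : is_adjoint H T A -> adj H T = A.
Proof.
move=> hA; have hadj : is_adjoint H T (adj H T) by apply: epsilon_spec; exists A.
apply: funext => y; apply: ip_inj_r => x; by rewrite -hadj hA.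
Qed.

Lemma adj_exists T : bounded_op H T -> exists A, is_adjoint H T A.
Proof.
move=> hT; have [M [M0 hM]] := bnd_pos hT; case: hT => [TD [TZ _]].
have ex : forall y, exists y', forall x, ip (T x) y = ip x y'.
  move=> y; apply: (@riesz _ _ H (fun x => ip (T x) y) (M * hnorm H y + 1)).
  - by move=> x1 x2; rewrite TD ipDl.
  - by move=> a x1; rewrite TZ ipZl.
  - by apply: ltr_pwDr => //; rewrite mulr_ge0 // hnorm_ge0.
  move=> x; apply: (le_trans (CS H _ _)).
  have := hM x; have := hnorm_ge0 H x; have := hnorm_ge0 H y; have := hnorm_ge0 H (T x).
  move: (hnorm H x) (hnorm H y) (hnorm H (T x)) => a b c h1 h2 h3 h4.
  nra.
have [A hA] := choice _ ex.
by exists A => x y; rewrite hA.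
Qed.

Lemma adj_spec T : bounded_op H T -> is_adjoint H T (adj H T).
Proof. by move=> hT; rewrite (adj_eq (_ : is_adjoint H T (proj1_sig (cid (adj_exists hT))))) //; case: cid. Qed.

Lemma adj_bounded T : bounded_op H T -> bounded_op H (adj H T).
Proof.
move=> hT; have hA := adj_spec hT.
have [M [M0 hM]] := bnd_pos hT.
split; [|split].
- move=> y z; apply: ip_inj_r => x; by rewrite ipDr -!hA ipDr.
- move=> a y; apply: ip_inj_r => x; by rewrite ipZr -!hA ipZr.
exists M => y.
set u := adj H T y.
have e1 : ip u u = ip (T u) y by rewrite hA.
have e2 : nc (ip u u) = hnorm H u ^+ 2 by rewrite ip_real nc_real ger0_norm ?q_ge0 // hnorm_sqr.
have h1 : hnorm H u ^+ 2 <= M * hnorm H u * hnorm H y.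
  rewrite -e2 e1; apply: (le_trans (CS H _ _)); apply: ler_wpM2r; [exact: hnorm_ge0|exact: hM].
have [hu0|hu0] := eqVneq (hnorm H u) 0.
  by rewrite hu0 mulr_ge0 // hnorm_ge0.
have hup : 0 < hnorm H u by rewrite lt_def hu0 hnorm_ge0.
by rewrite -(ler_pM2l hup) mulrA [hnorm H u * M]mulrC -expr2.
Qed.

Lemma hadjK T : bounded_op H T -> adj H (adj H T) = T.
Proof.
move=> hT; apply: adj_eq => x y.
by rewrite (@ip_conj _ _ H y (adj H T x)) -(adj_spec hT) -(@ip_conj _ _ H).
Qed.

Lemma hadjM T S : bounded_op H T -> bounded_op H S ->
  adj H (op_mul T S) = op_mul (adj H S) (adj H T).
Proof.
move=> hT hS; apply: adj_eq => x y; rewrite /op_mul.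
by rewrite (adj_spec hT) (adj_spec hS).
Qed.

Lemma hadjD T S : bounded_op H T -> bounded_op H S ->
  adj H (op_add T S) = op_add (adj H T) (adj H S).
Proof.
move=> hT hS; apply: adj_eq => x y; rewrite /op_add.
by rewrite ipDl ipDr (adj_spec hT) (adj_spec hS).
Qed.

Lemma hadjZ a T : bounded_op H T -> adj H (op_scale a T) = op_scale (conjc a) (adj H T).
Proof.
move=> hT; apply: adj_eq => x y; rewrite /op_scale.
by rewrite ipZl ipZr conjcK (adj_spec hT).
Qed.

Lemma hadjN T : bounded_op H T -> adj H (op_opp T) = op_opp (adj H T).
Proof.
move=> hT; apply: adj_eq => x y; rewrite /op_opp.
by rewrite ipNl ipNr (adj_spec hT).
Qed.
End E.

Section SC.
Variable K : comRingType.
Implicit Types j h e : K.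
Lemma sc1 h e j : j * j = -1 -> - j * h * (j * e) = h * e.
Proof. move=> jj; have -> : - j * h * (j * e) = - (j * j) * (h * e) by ring.
by rewrite jj opprK mul1r. Qed.
Lemma sc2 h e j : j * j = -1 -> - j * h * (- j * e) = - (h * e).
Proof. move=> jj; have -> : - j * h * (- j * e) = (j * j) * (h * e) by ring.
by rewrite jj mulN1r. Qed.
Lemma sc3 h e j : j * j = -1 -> j * h * (j * e) = - (h * e).
Proof. move=> jj; have -> : j * h * (j * e) = (j * j) * (h * e) by ring.
by rewrite jj mulN1r. Qed.
Lemma sc4 h e j : j * j = -1 -> j * h * (- j * e) = h * e.
Proof. move=> jj; have -> : j * h * (- j * e) = - (j * j) * (h * e) by ring.
by rewrite jj opprK mul1r. Qed.
End SC.

Section G.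
Variables (R : realType) (V : lmodType R[i]) (H : hilbert_space V).
Local Notation ip := (ip H).
Local Notation nc := (@ComplexField.Normc.normc R).

Lemma nc_expi (t : R) : nc (expi t) = 1.
Proof. by rewrite /= cos2Dsin2 sqrtr1. Qed.
Lemma nc_expiJ (t : R) : nc (conjc (expi t)) = 1.
Proof. by rewrite /= sqrrN cos2Dsin2 sqrtr1. Qed.
Lemma nc_i : nc 'i = 1.
Proof. by rewrite /= expr0n expr1n add0r sqrtr1. Qed.
Lemma nc_Ni : nc (- 'i) = 1.
Proof. by rewrite normcN nc_i. Qed.

Lemma expi_pi2 (t : R) : expi (t + pi / 2%:R) = 'i * expi t.
Proof. by rewrite /expi cosDpihalf sinDpihalf; simpc. Qed.

Lemma bounded_ReOp X : bounded_op H X -> bounded_op H (ReOp H X).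
Proof.
move=> hX; apply: bounded_scale; apply: bounded_add => //; exact: adj_bounded.
Qed.

Variable N : (V -> V) -> R.
Hypothesis hN : algebra_norm H N.

Lemma N_ge0 X : bounded_op H X -> 0 <= N X.
Proof. by case: hN => h _; apply: h. Qed.
Lemma N_scale a X : bounded_op H X -> N (op_scale a X) = nc a * N X.
Proof. by case: hN => _ [_ [h _]]; apply: h. Qed.
Lemma N_add X Y : bounded_op H X -> bounded_op H Y -> N (op_add X Y) <= N X + N Y.
Proof. by case: hN => _ [_ [_ [h _]]]; apply: h. Qed.
Lemma N_mul X Y : bounded_op H X -> bounded_op H Y -> N (op_mul X Y) <= N X * N Y.
Proof. by case: hN => _ [_ [_ [_ h]]]; apply: h. Qed.

Lemma G1 T P Q A : bounded_op H T -> bounded_op H P -> bounded_op H Q -> bounded_op H A ->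
  N (op_add (op_mul T P) (op_mul Q A)) <= N T * N P + N Q * N A.
Proof.
move=> hT hP hQ hA.
apply: (le_trans (N_add (bounded_mul hT hP) (bounded_mul hQ hA))).
by apply: lerD; apply: N_mul.
Qed.

Lemma wN_ub S (t : R) : bounded_op H S -> N (ReOp H (op_scale (expi t) S)) <= wN H N S.
Proof.
move=> hS; apply: ub_le_sup; last by exists t.
exists (nc (2%:R^-1) * (N S + N (adj H S))) => _ [s _ <-].
have hs := bounded_scale (expi s) hS.
rewrite /ReOp N_scale; last by apply: bounded_add => //; apply: adj_bounded.
apply: ler_wpM2l; first exact: nc_ge0.
apply: (le_trans (N_add hs (adj_bounded hs))).
rewrite hadjZ // !N_scale ?nc_expi ?nc_expiJ ?mul1r //; exact: adj_bounded.
Qed.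

Lemma id_plus T S (t : R) : bounded_op H T -> bounded_op H S ->
  ReOp H (op_scale (expi t) (op_add (op_mul T S) (op_mul S (adj H T))))
  = op_add (op_mul T (ReOp H (op_scale (expi t) S))) (op_mul (ReOp H (op_scale (expi t) S)) (adj H T)).
Proof.
move=> hT hS; have hA := adj_bounded hT.
have hX : bounded_op H (op_add (op_mul T S) (op_mul S (adj H T))).
  by apply: bounded_add; apply: bounded_mul.
rewrite /ReOp (hadjZ (expi t) hX) (hadjZ (expi t) hS).
rewrite (hadjD (bounded_mul hT hS) (bounded_mul hS hA)).
rewrite (hadjM hT hS) (hadjM hS hA) (hadjK hT).
apply: funext => x; rewrite /op_scale /op_add /op_mul.
case: hT => [TD [TZ _]]; rewrite TZ TD TZ TZ.
move: (T (S x)) (S (adj H T x)) (adj H S (adj H T x)) (T (adj H S x)) => a b c d.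
rewrite -scalerDr; congr (_ *: _); rewrite !scalerDr.
by rewrite [_ *: c + _]addrC addrACA.
Qed.

Lemma conjM (x y : R[i]) : conjc (x * y) = conjc x * conjc y.
Proof. by case: x => a b; case: y => c d; simpc; congr (_ +i* _); ring. Qed.

Lemma conj_i : conjc ('i : R[i]) = - 'i.
Proof. by simpc. Qed.

Lemma id_minus T S (t : R) : bounded_op H T -> bounded_op H S ->
  ReOp H (op_scale (expi t) (op_add (op_mul T S) (op_opp (op_mul S (adj H T)))))
  = op_add (op_mul T (op_scale (- 'i) (ReOp H (op_scale (expi (t + pi / 2%:R)) S))))
           (op_mul (op_scale 'i (ReOp H (op_scale (expi (t + pi / 2%:R)) S))) (adj H T)).
Proof.
move=> hT hS; have hA := adj_bounded hT.
have hX : bounded_op H (op_add (op_mul T S) (op_opp (op_mul S (adj H T)))).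
  by apply: bounded_add; [apply: bounded_mul | apply: bounded_opp; apply: bounded_mul].
rewrite /ReOp (hadjZ (expi t) hX) (hadjZ (expi (t + pi / 2%:R)) hS).
rewrite (hadjD (bounded_mul hT hS) (bounded_opp (bounded_mul hS hA))).
rewrite (hadjN (bounded_mul hS hA)).
rewrite (hadjM hT hS) (hadjM hS hA) (hadjK hT).
apply: funext => x; rewrite /op_scale /op_add /op_mul /op_opp.
case: hT => [TD [TZ _]]; rewrite TZ TZ TD TZ TZ.
move: (T (S x)) (S (adj H T x)) (adj H S (adj H T x)) (T (adj H S x)) => a b c d.
rewrite expi_pi2 conjM conj_i.
move: (expi t) ((expi t)^*%C) ((2%:R : R[i])^-1) => e f h.
have jj : ('i : R[i]) * 'i = -1 by rewrite -expr2 sqr_i.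
rewrite !scalerDr !scalerN !scalerA.
rewrite (sc1 _ _ jj) (sc2 _ _ jj) (sc3 _ _ jj) (sc4 _ _ jj) !scaleNr.
by rewrite [_ *: c - _]addrC addrACA.
Qed.
End G.

Theorem theorem2p5 (R : realType) (V : lmodType R[i]) (H : hilbert_space V)
    (N : (V -> V) -> R) (T S : V -> V) :
  algebra_norm H N -> bounded_op H T -> bounded_op H S ->
  [/\ wN H N (op_add (op_mul T S) (op_mul S (adj H T)))
        <= wN H N S * (N T + N (adj H T)),
      wN H N (op_add (op_mul T S) (op_opp (op_mul S (adj H T))))
        <= wN H N S * (N T + N (adj H T)) &
      (selfadjoint_norm H N ->
        wN H N (op_add (op_mul T S) (op_mul S (adj H T)))
          <= 2%:R * wN H N S * N T /\
        wN H N (op_add (op_mul T S) (op_opp (op_mul S (adj H T))))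
          <= 2%:R * wN H N S * N T)].
Proof.
move=> hN hT hS.
have hA := adj_bounded hT.
have NT0 := N_ge0 hN hT; have NA0 := N_ge0 hN hA.
have wS : forall t : R, N (ReOp H (op_scale (expi t) S)) <= wN H N S.
  by move=> t; apply: wN_ub.
have hSt : forall t : R, bounded_op H (ReOp H (op_scale (expi t) S)).
  by move=> t; apply: bounded_ReOp; apply: bounded_scale.
have Nt0 : forall t : R, 0 <= N (ReOp H (op_scale (expi t) S)).
  by move=> t; apply: (N_ge0 hN).
have plus : wN H N (op_add (op_mul T S) (op_mul S (adj H T)))
        <= wN H N S * (N T + N (adj H T)).
  apply: ge_sup; first by eexists; exists 0.
  move=> _ [t _ <-]; rewrite id_plus //.
  apply: (le_trans (G1 hN hT (hSt t) (hSt t) hA)).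
  have := wS t; have := Nt0 t.
  move: (N (ReOp H (op_scale (expi t) S))) (wN H N S) NT0 NA0 => a b c0 d0 h1 h2.
  have k1 : N T * a <= N T * b := ler_wpM2l c0 h2.
  have k2 : a * N (adj H T) <= b * N (adj H T) := ler_wpM2r d0 h2.
  by rewrite mulrDr (mulrC b (N T)); exact: lerD k1 k2.
have minus : wN H N (op_add (op_mul T S) (op_opp (op_mul S (adj H T))))
        <= wN H N S * (N T + N (adj H T)).
  apply: ge_sup; first by eexists; exists 0.
  move=> _ [t _ <-]; rewrite id_minus //.
  set u := t + pi / 2%:R.
  apply: (le_trans (G1 hN hT (bounded_scale _ (hSt u)) (bounded_scale _ (hSt u)) hA)).
  rewrite (N_scale hN (- 'i) (hSt u)) (N_scale hN 'i (hSt u)) nc_i nc_Ni !mul1r.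
  have := wS u; have := Nt0 u.
  move: (N (ReOp H (op_scale (expi u) S))) (wN H N S) NT0 NA0 => a b c0 d0 h1 h2.
  have k1 : N T * a <= N T * b := ler_wpM2l c0 h2.
  have k2 : a * N (adj H T) <= b * N (adj H T) := ler_wpM2r d0 h2.
  by rewrite mulrDr (mulrC b (N T)); exact: lerD k1 k2.
split => // hsa.
have e : wN H N S * (N T + N (adj H T)) = 2%:R * wN H N S * N T.
  by rewrite hsa //; ring.
by rewrite -e.
Qed.
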